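(* Let $G>0$, $T>0$, let $F\colon\mathbb R\to\mathbb R^2$ be $T$-periodic and of class $C^1$, and let $a\in(0,1)$ be such that $m_a(t,x,p)=\tfrac12|x|^2-\tfrac12a^2$ is a curvature bound function for $v_\lambda$ for every $\lambda\in[0,1]$. Then there exists $b>0$ such that $\mathbb R\times(\Gamma_a\cap\Delta_b)$ is a bound set for $v_\lambda$ for all $\lambda\in[0,1]$.
   Context: Let $\Omega=\{(x,p)\in\mathbb R^2\times\mathbb R^2:|x|<1\}$ and for $\lambda\in[0,1]$ let $v_\lambda(t,x,p)=\Big(1,\ p,\ \Big(G\sqrt{1-|x|^2}-\tfrac{(x^Tp)^2}{1-|x|^2}-|p|^2\Big)x+\lambda\big((x^TF(t))x-F(t)\big)\Big)$ on $\mathbb R\times\Omega$, with local flow $\phi^\lambda$. A $C^2$ function $e$ on an open subset $W\subset\mathbb R\times\Omega$ is a curvature bound function for $v$ if for every $z\in W$ with $e(z)=0$: $De(z)v(z)=0$ implies $v(z)^TD^2e(z)v(z)+De(z)Dv(z)v(z)>0$ (derivatives in all variables $(t,x,p)$). For $0<a<1$, $b>0$: $\Gamma_a=\{(x,p)\in\mathbb R^2\times\mathbb R^2:|x|\le a\}$, $\Delta_b=\{(x,p)\in\mathbb R^2\times\mathbb R^2:|x|<1,\ b|x|+|p|\le b\}$. A closed set $E\subset\mathbb R\times\Omega$ is a bound set for $v_\lambda$ if for every $\epsilon>0$ there is no $z\in\partial E$ with $\phi^\lambda_s(z)\in E$ for all $s\in(-\epsilon,\epsilon)$. *)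

(* Defs.v *)
(* R : realType, points of R x R^2 x R^2 are 'rV[R]_5
   with coordinates z_0 = t, (z_1, z_2) = x, (z_3, z_4) = p. *)
From HB Require Import structures.
From mathcomp Require Import all_boot all_order all_algebra.
From mathcomp Require Import all_classical all_reals all_analysis.
Set Implicit Arguments. Unset Strict Implicit. Unset Printing Implicit Defensive.
Import Order.TTheory GRing.Theory Num.Theory.
Import numFieldNormedType.Exports.
Local Open Scope classical_set_scope.
Local Open Scope ring_scope.

Section Defs.
Variable R : realType.
Notation pt := 'rV[R]_5.

Definition zt (z : pt) : R := z ord0 (inord 0).
Definition zx1 (z : pt) : R := z ord0 (inord 1).
Definition zx2 (z : pt) : R := z ord0 (inord 2).
Definition zp1 (z : pt) : R := z ord0 (inord 3).
Definition zp2 (z : pt) : R := z ord0 (inord 4).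

Definition mk5 (a b c d e : R) : pt := \row_(i < 5) nth 0 [:: a; b; c; d; e] i.

Definition nx2 (z : pt) : R := zx1 z ^+ 2 + zx2 z ^+ 2.
Definition np2 (z : pt) : R := zp1 z ^+ 2 + zp2 z ^+ 2.
Definition xdotp (z : pt) : R := zx1 z * zp1 z + zx2 z * zp2 z.
Definition normx (z : pt) : R := Num.sqrt (nx2 z).
Definition normp (z : pt) : R := Num.sqrt (np2 z).

Definition RxOmega : set pt := [set z | normx z < 1].

Definition vfield (G : R) (F : R -> 'rV[R]_2) (lam : R) (z : pt) : pt :=
  let t := zt z in
  let F1 := F t ord0 (inord 0) in
  let F2 := F t ord0 (inord 1) in
  let xF := zx1 z * F1 + zx2 z * F2 in
  let c := G * Num.sqrt (1 - nx2 z) - (xdotp z) ^+ 2 / (1 - nx2 z) - np2 z in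
  mk5 1 (zp1 z) (zp2 z)
      (c * zx1 z + lam * (xF * zx1 z - F1))
      (c * zx2 z + lam * (xF * zx2 z - F2)).

Definition partial (V : normedModType R) (f : pt -> V) (i : 'I_5) (z : pt) : V :=
  derive f z (delta_mx ord0 i).

Definition C1_on (V : normedModType R) (W : set pt) (f : pt -> V) : Prop :=
  forall i : 'I_5, (forall z, W z -> derivable f z (delta_mx ord0 i)) /\
                   {within W, continuous (partial f i)}.
Definition C2_on (W : set pt) (f : pt -> R) : Prop :=
  C1_on W f /\ forall i : 'I_5, C1_on W (partial f i).

Definition De (e : pt -> R) (z w : pt) : R := derive e z w.
Definition D2e (e : pt -> R) (z w : pt) : R := derive (fun y => derive e y w) z w.
Definition Dv (v : pt -> pt) (z w : pt) : pt := derive v z w.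

Definition curvature_bound_function (W : set pt) (v : pt -> pt) (e : pt -> R) : Prop :=
  open W /\ W `<=` RxOmega /\ C2_on W e /\
  forall z, W z -> e z = 0 -> De e z (v z) = 0 ->
    0 < D2e e z (v z) + De e z (Dv v z (v z)).

(* a solution of z' = v(z) in R x Omega on (-eps, eps) through z at time 0,
   i.e. s |-> phi_s(z) on (-eps, eps) *)
Definition trajectory (v : pt -> pt) (z : pt) (eps : R) (g : R -> pt) : Prop :=
  g 0 = z /\
  forall s, - eps < s < eps ->
    RxOmega (g s) /\ derivable g s 1 /\ derive g s 1 = v (g s).

Definition bdry (E : set pt) : set pt := closure E `\` interior E.

Definition bound_set (v : pt -> pt) (E : set pt) : Prop :=
  closed E /\ E `<=` RxOmega /\
  forall eps, 0 < eps ->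
    ~ (exists z g, bdry E z /\ trajectory v z eps g /\
                   forall s, - eps < s < eps -> E (g s)).

Definition m_a (a : R) (z : pt) : R := nx2 z / 2 - a ^+ 2 / 2.

Definition Gamma_a (a : R) : set pt := [set z | normx z <= a].
Definition Delta_b (b : R) : set pt := [set z | normx z < 1 /\ b * normx z + normp z <= b].

Definition Tperiodic (T : R) (F : R -> 'rV[R]_2) : Prop := forall t, F (t + T) = F t.
Definition C1_fun (F : R -> 'rV[R]_2) : Prop :=
  (forall t, derivable F t 1) /\ continuous (fun t => derive F t 1).

End Defs.

(* Main.v *)
Require Import Defs.
From HB Require Import structures.
From mathcomp Require Import all_boot all_order all_algebra.
From mathcomp Require Import all_classical all_reals all_analysis.
From mathcomp Require Import ring lra.
Import Order.TTheory GRing.Theory Num.Theory.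
Import numFieldNormedType.Exports.
Local Open Scope classical_set_scope.
Local Open Scope ring_scope.
Set Implicit Arguments. Unset Strict Implicit. Unset Printing Implicit Defensive.

Section S0.
Variable R : realType.
Notation pt := 'rV[R]_5.

Lemma isd_conv (f g : R -> R) (s df dg : R) : is_derive s 1 f df -> f = g -> df = dg -> is_derive s 1 g dg.
Proof. by move=> H <- <-. Qed.

Lemma isdD (f g : R -> R) (s df dg : R) : is_derive s 1 f df -> is_derive s 1 g dg ->
  is_derive s 1 (fun u => f u + g u) (df + dg).
Proof. move=> H1 H2. have := @is_deriveD R R R f g s 1 df dg H1 H2. by []. Qed.

Lemma isdB (f g : R -> R) (s df dg : R) : is_derive s 1 f df -> is_derive s 1 g dg ->
  is_derive s 1 (fun u => f u - g u) (df - dg).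
Proof. move=> H1 H2. have := @is_deriveB R R R f g s 1 df dg H1 H2. by []. Qed.

Lemma isdM (f g : R -> R) (s df dg : R) : is_derive s 1 f df -> is_derive s 1 g dg ->
  is_derive s 1 (fun u => f u * g u) (df * g s + f s * dg).
Proof. move=> H1 H2. have := @is_deriveM R R f g s 1 df dg H1 H2.
move=> H; apply: (is_derive_eq H). rewrite /GRing.scale /=. ring. Qed.

Lemma isdC (s k : R) : is_derive s 1 (fun u => k) 0.
Proof. exact: is_derive_cst. Qed.
Arguments isdC : clear implicits.

Lemma isdV (f : R -> R) (s df : R) : is_derive s 1 f df -> f s != 0 ->
  is_derive s 1 (fun u => (f u)^-1) (- df / (f s) ^+ 2).
Proof. move=> H1 H0; apply: (is_derive_eq (is_deriveV H0 H1)).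
rewrite /GRing.scale /=. by field. Qed.

Lemma isdS (f : R -> R) (s df : R) : is_derive s 1 f df -> 0 < f s ->
  is_derive s 1 (fun u => Num.sqrt (f u)) (df / (2 * Num.sqrt (f s))).
Proof. move=> H1 H0.
have := @is_derive1_comp R Num.sqrt f s _ _ (is_derive1_sqrt H0) H1.
move=> H; apply: (is_derive_eq H). by rewrite mulrC. Qed.

Lemma isdId (s : R) : is_derive s 1 (fun u : R => u) 1.
Proof. exact: is_derive_id. Qed.

Lemma deriveLine (V : normedModType R) (f : pt -> V) z w :
  'D_w f z = 'D_1 (fun h : R => f (h *: w + z)) 0.
Proof.
rewrite /derive; set g1 := fun h => h^-1 *: _; set g2 := fun h => h^-1 *: _.
suff -> : g1 = g2 by [].
by rewrite funeqE /g1 /g2 => h /=; rewrite addr0 scale0r add0r [_%:A]mulr1.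
Qed.

Lemma coord_isd n (g : R -> 'rV[R]_n) (s : R) (i : 'I_n) : derivable g s 1 ->
  is_derive s 1 (fun u => g u ord0 i) ('D_1 g s ord0 i).
Proof.
move=> H; have H1 := (derivable_mxP g s 1).1 H ord0 i.
constructor; first exact: H1. by rewrite (derive_mx H) mxE.
Qed.


Lemma isdX2 (f : R -> R) (s df : R) : is_derive s 1 f df ->
  is_derive s 1 (fun u => f u ^+ 2) (2 * f s * df).
Proof. move=> H; eapply isd_conv; first exact: (isdM H H).
  by rewrite funeqE => u; rewrite expr2.
by rewrite /=; ring. Qed.

Definition cval (G x1 x2 p1 p2 : R) :=
  G * Num.sqrt (1 - (x1 ^+ 2 + x2 ^+ 2)) - (x1 * p1 + x2 * p2) ^+ 2 / (1 - (x1 ^+ 2 + x2 ^+ 2))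
  - (p1 ^+ 2 + p2 ^+ 2).

Definition dcval (G x1 x2 p1 p2 dx1 dx2 dp1 dp2 : R) :=
  let Rr := x1 ^+ 2 + x2 ^+ 2 in let dR := 2 * (x1 * dx1 + x2 * dx2) in
  let q := x1 * p1 + x2 * p2 in let dq := dx1 * p1 + x1 * dp1 + dx2 * p2 + x2 * dp2 in
  - G * dR / (2 * Num.sqrt (1 - Rr)) - (2 * q * dq / (1 - Rr) + q ^+ 2 * dR / (1 - Rr) ^+ 2)
  - 2 * (p1 * dp1 + p2 * dp2).

Lemma c_isd G (X1 X2 P1 P2 : R -> R) (s dx1 dx2 dp1 dp2 : R) :
  is_derive s 1 X1 dx1 -> is_derive s 1 X2 dx2 ->
  is_derive s 1 P1 dp1 -> is_derive s 1 P2 dp2 ->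
  X1 s ^+ 2 + X2 s ^+ 2 < 1 ->
  is_derive s 1 (fun u => cval G (X1 u) (X2 u) (P1 u) (P2 u))
    (dcval G (X1 s) (X2 s) (P1 s) (P2 s) dx1 dx2 dp1 dp2).
Proof.
move=> h1 h2 hp1 hp2 hlt.
have pos : 0 < 1 - (X1 s ^+ 2 + X2 s ^+ 2) by rewrite subr_gt0.
have nz : 1 - (X1 s ^+ 2 + X2 s ^+ 2) != 0 by rewrite gt_eqF.
have sq : 0 < Num.sqrt (1 - (X1 s ^+ 2 + X2 s ^+ 2)) by rewrite sqrtr_gt0.
have hR := isdD (isdX2 h1) (isdX2 h2).
have h1R := isdB (isdC s 1) hR.
have hS := isdS h1R pos.
have hGS := isdM (isdC s G) hS.
have hq := isdD (isdM h1 hp1) (isdM h2 hp2).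
have hq2 := isdX2 hq.
have hinv := isdV h1R nz.
have hdiv := isdM hq2 hinv.
have hP := isdD (isdX2 hp1) (isdX2 hp2).
have hc := isdB (isdB hGS hdiv) hP.
apply: (isd_conv hc); first by [].
rewrite /dcval /=. field.
by rewrite nz gt_eqF.
Qed.


Lemma F_isd (F : R -> 'rV[R]_2) (T : R -> R) (s dt : R) k : is_derive s 1 T dt ->
  derivable F (T s) 1 ->
  is_derive s 1 (fun u => F (T u) ord0 k) ('D_1 F (T s) ord0 k * dt).
Proof.
move=> hT hF.
have := @is_derive1_comp R (fun u => F u ord0 k) T s _ _ (coord_isd k hF) hT.
by [].
Qed.

Definition Vval (G lam x1 x2 p1 p2 F1 F2 X Fk : R) :=
  cval G x1 x2 p1 p2 * X + lam * ((x1 * F1 + x2 * F2) * X - Fk).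
Definition dVval (G lam x1 x2 p1 p2 F1 F2 D1 D2 dt dx1 dx2 dp1 dp2 X dX Fk Dk : R) :=
  dcval G x1 x2 p1 p2 dx1 dx2 dp1 dp2 * X + cval G x1 x2 p1 p2 * dX
  + lam * ((dx1 * F1 + x1 * (D1 * dt) + dx2 * F2 + x2 * (D2 * dt)) * X
           + (x1 * F1 + x2 * F2) * dX - Dk * dt).

Lemma V_isd G lam (F : R -> 'rV[R]_2) (T X1 X2 P1 P2 X : R -> R) (s dt dx1 dx2 dp1 dp2 dX : R) (k : 'I_2) :
  is_derive s 1 T dt ->
  is_derive s 1 X1 dx1 -> is_derive s 1 X2 dx2 ->
  is_derive s 1 P1 dp1 -> is_derive s 1 P2 dp2 -> is_derive s 1 X dX ->
  derivable F (T s) 1 ->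
  X1 s ^+ 2 + X2 s ^+ 2 < 1 ->
  is_derive s 1 (fun u => Vval G lam (X1 u) (X2 u) (P1 u) (P2 u)
       (F (T u) ord0 (inord 0)) (F (T u) ord0 (inord 1)) (X u) (F (T u) ord0 k))
    (dVval G lam (X1 s) (X2 s) (P1 s) (P2 s)
       (F (T s) ord0 (inord 0)) (F (T s) ord0 (inord 1))
       ('D_1 F (T s) ord0 (inord 0)) ('D_1 F (T s) ord0 (inord 1))
       dt dx1 dx2 dp1 dp2 (X s) dX (F (T s) ord0 k) ('D_1 F (T s) ord0 k)).
Proof.
move=> hT h1 h2 hp1 hp2 hX hF hlt.
have hc := c_isd G h1 h2 hp1 hp2 hlt.
have hF0 := F_isd (inord 0) hT hF.
have hF1 := F_isd (inord 1) hT hF.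
have hFk := F_isd k hT hF.
have hxF := isdD (isdM h1 hF0) (isdM h2 hF1).
have hall := isdD (isdM hc hX) (isdM (isdC s lam) (isdB (isdM hxF hX) hFk)).
apply: (isd_conv hall); first by [].
rewrite /dVval /=. ring.
Qed.

Lemma vfield3E G F lam (z : pt) : vfield G F lam z ord0 (inord 3) =
  Vval G lam (zx1 z) (zx2 z) (zp1 z) (zp2 z) (F (zt z) ord0 (inord 0)) (F (zt z) ord0 (inord 1))
    (zx1 z) (F (zt z) ord0 (inord 0)).
Proof. by rewrite /vfield mxE inordK. Qed.
Lemma vfield4E G F lam (z : pt) : vfield G F lam z ord0 (inord 4) =
  Vval G lam (zx1 z) (zx2 z) (zp1 z) (zp2 z) (F (zt z) ord0 (inord 0)) (F (zt z) ord0 (inord 1))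
    (zx2 z) (F (zt z) ord0 (inord 1)).
Proof. by rewrite /vfield mxE inordK. Qed.
Lemma vfield0E G F lam (z : pt) : vfield G F lam z ord0 (inord 0) = 1.
Proof. by rewrite /vfield mxE inordK. Qed.
Lemma vfield1E G F lam (z : pt) : vfield G F lam z ord0 (inord 1) = zp1 z.
Proof. by rewrite /vfield mxE inordK. Qed.
Lemma vfield2E G F lam (z : pt) : vfield G F lam z ord0 (inord 2) = zp2 z.
Proof. by rewrite /vfield mxE inordK. Qed.


Lemma line_isd (z w : pt) (i : 'I_5) (s : R) :
  is_derive s 1 (fun h : R => (h *: w + z) ord0 i) (w ord0 i).
Proof.
have H := isdD (isdM (isdId s) (isdC s (w ord0 i))) (isdC s (z ord0 i)).
apply: (isd_conv H).
  by rewrite funeqE => h; rewrite !mxE.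
by rewrite /=; ring.
Qed.

Lemma vfield_curve_isd G F lam (g : R -> pt) (s : R) (d : 'I_5 -> R) :
  (forall i, is_derive s 1 (fun u => g u ord0 i) (d i)) ->
  derivable F (zt (g s)) 1 -> nx2 (g s) < 1 ->
  is_derive s 1 (fun u => vfield G F lam (g u) ord0 (inord 3))
    (dVval G lam (zx1 (g s)) (zx2 (g s)) (zp1 (g s)) (zp2 (g s))
       (F (zt (g s)) ord0 (inord 0)) (F (zt (g s)) ord0 (inord 1))
       ('D_1 F (zt (g s)) ord0 (inord 0)) ('D_1 F (zt (g s)) ord0 (inord 1))
       (d (inord 0)) (d (inord 1)) (d (inord 2)) (d (inord 3)) (d (inord 4))
       (zx1 (g s)) (d (inord 1)) (F (zt (g s)) ord0 (inord 0)) ('D_1 F (zt (g s)) ord0 (inord 0)))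
  /\
  is_derive s 1 (fun u => vfield G F lam (g u) ord0 (inord 4))
    (dVval G lam (zx1 (g s)) (zx2 (g s)) (zp1 (g s)) (zp2 (g s))
       (F (zt (g s)) ord0 (inord 0)) (F (zt (g s)) ord0 (inord 1))
       ('D_1 F (zt (g s)) ord0 (inord 0)) ('D_1 F (zt (g s)) ord0 (inord 1))
       (d (inord 0)) (d (inord 1)) (d (inord 2)) (d (inord 3)) (d (inord 4))
       (zx2 (g s)) (d (inord 2)) (F (zt (g s)) ord0 (inord 1)) ('D_1 F (zt (g s)) ord0 (inord 1))).
Proof.
move=> hd hF hlt; split.
- have H := V_isd G lam (inord 0) (hd (inord 0)) (hd (inord 1)) (hd (inord 2))
    (hd (inord 3)) (hd (inord 4)) (hd (inord 1)) hF hlt.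
  apply: (isd_conv H) => //.
  by rewrite funeqE => u; rewrite vfield3E.
- have H := V_isd G lam (inord 1) (hd (inord 0)) (hd (inord 1)) (hd (inord 2))
    (hd (inord 3)) (hd (inord 4)) (hd (inord 2)) hF hlt.
  apply: (isd_conv H) => //.
  by rewrite funeqE => u; rewrite vfield4E.
Qed.

Lemma ord5_cases (P : 'I_5 -> Prop) :
  P (inord 0) -> P (inord 1) -> P (inord 2) -> P (inord 3) -> P (inord 4) -> forall j, P j.
Proof.
move=> H0 H1 H2 H3 H4 j.
have -> : j = inord (val j) by apply/val_inj; rewrite /= inordK.
by case: j => [[|[|[|[|[|?]]]]] Hj] //=.
Qed.

Lemma vfield_derivable G F lam (z w : pt) :
  derivable F (zt z) 1 -> nx2 z < 1 -> derivable (vfield G F lam) z w.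
Proof.
move=> hF hlt; apply/derivable1P/derivable_mxP => i j.
have -> : i = ord0 by apply/val_inj; case: i => [[]].
have hd := fun k => line_isd z w k 0.
have e0 : 0 *: w + z = z by rewrite scale0r add0r.
have hF' : derivable F (zt (0 *: w + z)) 1 by rewrite e0.
have hlt' : nx2 (0 *: w + z) < 1 by rewrite e0.
have [h3 h4] := @vfield_curve_isd G F lam (fun h => h *: w + z) 0 _ hd hF' hlt'.
move: j; apply: ord5_cases.
- have H : is_derive (0:R) 1 (fun u : R => vfield G F lam (u *: w + z) ord0 (inord 0)) 0.
    apply: (isd_conv (isdC 0 1)) => //.
    by rewrite funeqE => u /=; rewrite vfield0E.
  by case: H.
- have H : is_derive (0:R) 1 (fun u : R => vfield G F lam (u *: w + z) ord0 (inord 1)) (w ord0 (inord 3)).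
    apply: (isd_conv (hd (inord 3))) => //.
    by rewrite funeqE => u /=; rewrite vfield1E.
  by case: H.
- have H : is_derive (0:R) 1 (fun u : R => vfield G F lam (u *: w + z) ord0 (inord 2)) (w ord0 (inord 4)).
    apply: (isd_conv (hd (inord 4))) => //.
    by rewrite funeqE => u /=; rewrite vfield2E.
  by case: H.
- by case: h3.
- by case: h4.
Qed.


Lemma Dv_coord G F lam (z w : pt) : derivable F (zt z) 1 -> nx2 z < 1 ->
  Dv (vfield G F lam) z w ord0 (inord 1) = w ord0 (inord 3) /\
  Dv (vfield G F lam) z w ord0 (inord 2) = w ord0 (inord 4).
Proof.
move=> hF hlt.
have D : derivable (vfield G F lam) z w by apply: vfield_derivable.
rewrite /Dv (derive_mx D) !mxE.
rewrite !deriveLine; split; apply: derive_val.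
- apply: (isd_conv (line_isd z w (inord 3) 0)) => //.
  by rewrite funeqE => u /=; rewrite vfield1E.
- apply: (isd_conv (line_isd z w (inord 4) 0)) => //.
  by rewrite funeqE => u /=; rewrite vfield2E.
Qed.

Lemma De_m (a : R) (z w : pt) :
  De (m_a a) z w = zx1 z * w ord0 (inord 1) + zx2 z * w ord0 (inord 2).
Proof.
rewrite /De deriveLine; apply: derive_val.
have hx1 := line_isd z w (inord 1) 0.
have hx2 := line_isd z w (inord 2) 0.
have H := isdB (isdM (isdD (isdX2 hx1) (isdX2 hx2)) (isdC 0 (2^-1))) (isdC 0 (a ^+ 2 / 2)).
apply: (isd_conv H) => //.
rewrite /= scale0r add0r /zx1 /zx2; by field.
Qed.

Lemma D2e_m (a : R) (z w : pt) :
  D2e (m_a a) z w = w ord0 (inord 1) ^+ 2 + w ord0 (inord 2) ^+ 2.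
Proof.
rewrite /D2e.
have -> : (fun y => derive (m_a a) y w) =
   (fun y => zx1 y * w ord0 (inord 1) + zx2 y * w ord0 (inord 2)).
  by rewrite funeqE => y; rewrite -(De_m a).
rewrite deriveLine; apply: derive_val.
have hx1 := line_isd z w (inord 1) 0.
have hx2 := line_isd z w (inord 2) 0.
have H := isdD (isdM hx1 (isdC 0 (w ord0 (inord 1)))) (isdM hx2 (isdC 0 (w ord0 (inord 2)))).
apply: (isd_conv H) => //.
rewrite /=; ring.
Qed.


Lemma max2 (f f1 : R -> R) (eps d : R) : 0 < eps ->
  (forall s : R, -eps < s < eps -> is_derive s 1 f (f1 s)) ->
  (forall s : R, -eps < s < eps -> f s <= f 0) ->
  is_derive (0:R) 1 f1 d -> (f1 0 = 0 -> 0 < d) -> False.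
Proof.
move=> e0 hd hmax hd1 hpos.
have in_itv_eps : forall s, s \in `]-eps, eps[ -> -eps < s < eps.
  by move=> s; rewrite in_itv.
have f10 : f1 0 = 0.
  have H0 : is_derive (0:R) 1 f 0.
    apply: (@derive1_at_max R f (-eps) eps 0).
    - lra.
    - by move=> t /in_itv_eps /hd [].
    - rewrite in_itv /=; apply/andP; split; lra.
    - by move=> t /in_itv_eps /hmax.
  have H1 : is_derive (0:R) 1 f (f1 0) by apply: hd; apply/andP; split; lra.
  by rewrite -(@derive_val _ _ _ _ _ _ _ H1) (@derive_val _ _ _ _ _ _ _ H0).
have dpos := hpos f10.
have Hc : (fun h => h^-1 *: ((f1 \o shift 0) (h *: 1) - f1 0)) @ 0^' --> d.
  case: hd1 => H1 H2; rewrite -H2; exact: H1.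
have := @cvgr_gt R _ _ _ _ _ Hc (d / 2) ltac:(lra).
move=> /nbhs_ballP [e ep He].
pose h0 := Num.min e eps / 2.
have h0p : 0 < h0 by rewrite /h0 divr_gt0 // lt_min ep e0.
have mp : 0 < Num.min e eps by rewrite lt_min ep e0.
have m1 : Num.min e eps <= e by rewrite ge_min lexx.
have m2 : Num.min e eps <= eps by rewrite ge_min lexx orbT.
have h0e : h0 < e by rewrite /h0; lra.
have h0eps : h0 < eps by rewrite /h0; lra.
have pos1 : forall t, 0 < t <= h0 -> 0 < f1 t.
  move=> t /andP [t0 th0].
  have : ball (0:R) e t by rewrite /ball /= sub0r normrN gtr0_norm //; lra.
  move=> /He /(_ (lt0r_neq0 t0)) /=.
  rewrite /= addr0 /GRing.scale /= mulr1 f10 subr0 => H.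
  have : 0 < t^-1 * f1 t by lra.
  by rewrite pmulr_rgt0 // invr_gt0.
have [c cI Hmvt] : exists2 c, c \in `]0, h0[ & f h0 - f 0 = f1 c * (h0 - 0).
  apply: MVT => //.
  - move=> x; rewrite in_itv /= => /andP[x0 xh]; apply: hd; apply/andP; split; lra.
  - apply: derivable_within_continuous => x; rewrite in_itv /= => /andP [x0 xh].
    have : - eps < x < eps by apply/andP; split; lra.
    by move=> /hd [].
move: cI; rewrite in_itv /= => /andP [c0 ch].
have := pos1 c ltac:(apply/andP; split; lra).
have := hmax h0 ltac:(apply/andP; split; lra).
move=> H1 H2.
have : 0 < f1 c * (h0 - 0) by rewrite subr0 mulr_gt0.
rewrite -Hmvt; lra.
Qed.

Lemma per_nat (f : R -> R) (T : R) : (forall t, f (t + T) = f t) ->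
  forall (k : nat) u, f (u + k%:R * T) = f u.
Proof.
move=> hp; elim=> [|k IH] u; first by rewrite mul0r addr0.
by rewrite -addn1 natrD mulrDl mul1r addrA hp IH.
Qed.

Lemma per_int (f : R -> R) (T : R) : (forall t, f (t + T) = f t) ->
  forall (n : int) u, f (u + n%:~R * T) = f u.
Proof.
move=> hp [k|k] u; first exact: per_nat.
rewrite NegzE mulrNz mulNr.
by rewrite -[in RHS](subrK ((k.+1)%:R * T) u) per_nat.
Qed.

Lemma periodic_bound (f : R -> R) (T : R) : 0 < T -> continuous f ->
  (forall t, f (t + T) = f t) -> exists M, forall t, `|f t| <= M.
Proof.
move=> T0 fc hp.
have [c _ hc] := @EVT_max R (fun t => `|f t|) 0 T (ltW T0)
  (continuous_subspaceT (fun x => continuous_comp (fc x) (@norm_continuous _ R^o _))).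
exists `|f c| => t.
pose n := Num.floor (t / T).
have := floor_itv (t / T); rewrite -/n => /andP [h1 h2].
have e : t = (t - n%:~R * T) + n%:~R * T by rewrite subrK.
rewrite e per_int //; apply: hc.
rewrite ler_pdivlMr // in h1.
rewrite ltr_pdivrMr // intrD mulrDl mul1r in h2.
rewrite in_itv /=; apply/andP; split; lra.
Qed.

Lemma derive_per (F : R -> 'rV[R]_2) (T t : R) : (forall t, F (t + T) = F t) ->
  'D_1 F (t + T) = 'D_1 F t.
Proof.
move=> hp; rewrite /derive.
have -> : (fun h : R => h^-1 *: ((F \o shift (t + T)) (h *: 1) - F (t + T))) =
          (fun h : R => h^-1 *: ((F \o shift t) (h *: 1) - F t)).
  by rewrite funeqE => h /=; rewrite /shift /= addrA !hp.
by [].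
Qed.

Lemma F_bounds (F : R -> 'rV[R]_2) (T : R) : 0 < T -> (forall t, F (t + T) = F t) ->
  (forall t, derivable F t 1) -> continuous (fun t => 'D_1 F t) ->
  exists M, 0 <= M /\ forall t (k : 'I_2), `|F t ord0 k| <= M /\ `|'D_1 F t ord0 k| <= M.
Proof.
move=> T0 hp hd hc.
have cF : continuous F.
  by move=> t; apply: differentiable_continuous; apply/derivable1_diffP.
have B1 : forall k : 'I_2, exists M, forall t, `|F t ord0 k| <= M.
  move=> k; apply: (@periodic_bound (fun t => F t ord0 k) T T0).
  - by move=> t; apply: continuous_comp (cF t) (@coord_continuous R 1 2 ord0 k _).
  - by move=> t; rewrite hp.
have B2 : forall k : 'I_2, exists M, forall t, `|'D_1 F t ord0 k| <= M.
  move=> k; apply: (@periodic_bound (fun t => 'D_1 F t ord0 k) T T0).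
  - by move=> t; apply: continuous_comp (hc t) (@coord_continuous R 1 2 ord0 k _).
  - by move=> t; rewrite derive_per.
have [M0 h0] := B1 ord0; have [M1 h1] := B1 ord_max.
have [M2 h2] := B2 ord0; have [M3 h3] := B2 ord_max.
exists (Num.max (Num.max M0 M1) (Num.max (Num.max M2 M3) 0)); split.
  by rewrite !le_max lexx !orbT.
move=> t k.
have [->|->] : k = ord0 \/ k = ord_max.
  case: k => [[|[|m]]] Hk //=; [left|right]; by apply/val_inj.
split.
- by rewrite (le_trans (h0 t)) // !le_max lexx ?orbT.
- by rewrite (le_trans (h2 t)) // !le_max lexx ?orbT.
split.
- by rewrite (le_trans (h1 t)) // !le_max lexx ?orbT.
- by rewrite (le_trans (h3 t)) // !le_max lexx ?orbT.
Qed.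

Lemma cD (f g : pt -> R) z : {for z, continuous f} -> {for z, continuous g} ->
  {for z, continuous (fun y => f y + g y)}.
Proof. exact: continuousD. Qed.
Lemma cM (f g : pt -> R) z : {for z, continuous f} -> {for z, continuous g} ->
  {for z, continuous (fun y => f y * g y)}.
Proof. exact: continuousM. Qed.
Lemma cC (k : R) (z : pt) : {for z, continuous (fun y : pt => k)}.
Proof. exact: (@cst_continuous _ _ k z). Qed.
Lemma cco (i : 'I_5) (z : pt) : {for z, continuous (fun y : pt => y ord0 i)}.
Proof. exact: coord_continuous. Qed.
Lemma cS (f : pt -> R) z : {for z, continuous f} -> {for z, continuous (fun y => Num.sqrt (f y))}.
Proof. move=> H; exact: (continuous_comp H (@sqrt_continuous R _)). Qed.

Lemma normx_cont : continuous (@normx R).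
Proof.
move=> z; apply: cS; apply: cD; rewrite /zx1 /zx2; apply: cM; exact: cco.
Qed.
Lemma normp_cont : continuous (@normp R).
Proof.
move=> z; apply: cS; apply: cD; rewrite /zp1 /zp2; apply: cM; exact: cco.
Qed.
Lemma face_cont (b : R) : continuous (fun z : pt => b * normx z + normp z).
Proof.
move=> z; apply: cD; [apply: cM; [exact: cC|exact: normx_cont]|exact: normp_cont].
Qed.

Lemma E_closed (a b : R) : a < 1 -> closed (Gamma_a a `&` Delta_b b).
Proof.
move=> a1.
have -> : Gamma_a a `&` Delta_b b =
   (@normx R) @^-1` [set x | x <= a] `&` (fun z : pt => b * normx z + normp z) @^-1` [set x | x <= b].
  apply/seteqP; split => z /=.
  - by rewrite /Gamma_a /Delta_b /= => -[h1 [h2 h3]].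
  - rewrite /Gamma_a /Delta_b /= => -[h1 h3]; split => //; split => //.
    exact: le_lt_trans h1 a1.
apply: closedI; apply: preimage_closed; try exact: closed_le.
- by move=> z _; apply: normx_cont.
- by move=> z _; apply: face_cont.
Qed.

Lemma E_interior (a b : R) (z : pt) : a < 1 -> normx z < a -> b * normx z + normp z < b ->
  interior (Gamma_a a `&` Delta_b b) z.
Proof.
move=> a1 h1 h2.
have Uo : open ((@normx R) @^-1` [set x | x < a] `&` (fun z : pt => b * normx z + normp z) @^-1` [set x | x < b]).
  apply: openI; apply: open_comp; try exact: open_lt.
  - by move=> y _; apply: normx_cont.
  - by move=> y _; apply: face_cont.
rewrite /interior; apply: (@filterS _ _ _ ((@normx R) @^-1` [set x | x < a] `&` (fun z : pt => b * normx z + normp z) @^-1` [set x | x < b])).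
  move=> y [/= hy1 hy2]; split; rewrite /Gamma_a /Delta_b /=.
  - exact: ltW.
  - split; last exact: ltW.
    exact: lt_trans hy1 a1.
apply: open_nbhs_nbhs; split => //.
Qed.

Lemma bdry_cases (a b : R) (z : pt) : a < 1 -> bdry (Gamma_a a `&` Delta_b b) z ->
  (Gamma_a a `&` Delta_b b) z /\
  (normx z = a \/ (normx z < a /\ b * normx z + normp z = b)).
Proof.
move=> a1 [hc hi].
have hE : (Gamma_a a `&` Delta_b b) z.
  by move: hc; rewrite -(closure_id _).1 //; apply: E_closed.
split => //.
case: hE => [h1 [h2 h3]]; rewrite /Gamma_a /= in h1.
case: (ltrP (normx z) a) => ha; last by left; apply/eqP; rewrite eq_le h1 ha.
right; split => //.
case: (ltrP (b * normx z + normp z) b) => hb; last by apply/eqP; rewrite eq_le h3 hb.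
by exfalso; apply: hi; apply: E_interior.
Qed.

End S0.

Section S1.
Variable R : realType.

Lemma nM (u w U W : R) : `|u| <= U -> `|w| <= W -> `|u * w| <= U * W.
Proof. move=> h1 h2; rewrite normrM ler_pM //. Qed.
Lemma nD (u w U W : R) : `|u| <= U -> `|w| <= W -> `|u + w| <= U + W.
Proof. move=> h1 h2; exact: le_trans (ler_normD _ _) (lerD h1 h2). Qed.
Lemma nN (u U : R) : `|u| <= U -> `|- u| <= U.
Proof. by rewrite normrN. Qed.
Lemma nlo (u U : R) : `|u| <= U -> - U <= u.
Proof. by rewrite ler_norml => /andP []. Qed.
Lemma nhi (u U : R) : `|u| <= U -> u <= U.
Proof. by rewrite ler_norml => /andP []. Qed.
Lemma le_rw (x y x' y' : R) : x = x' -> y = y' -> x' <= y' -> x <= y.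
Proof. by move=> -> ->. Qed.
Lemma le_eqr (x y : R) : x = y -> x <= y.
Proof. by move=> ->. Qed.
Lemma nmk (u U : R) : - U <= u -> u <= U -> `|u| <= U.
Proof. by move=> h1 h2; rewrite ler_norml h1 h2. Qed.

Definition Cbig (G M L k : R) :=
  let C3 := G + k ^+ 2 * L + k + 4 * M in
  let C4 := (2 * k + 2 * C3) ^+ 2 in
  let C5 := 2 + G + k ^+ 2 * L + 2 * M in
  let C6 := G * L * k ^+ 2 + 2 * k ^+ 2 * C5 * L + 2 * k ^+ 4 * L ^+ 2 + 2 * k * C3 in
  let C7 := C6 + k ^+ 2 * L + 2 * M * k + 6 * M in
  (k ^+ 2 * L + 2 * M) + C4 / 4 + C7.

Lemma alg (G lam a b M L k x1 x2 p1 p2 F1 F2 D1 D2 r rho S iS iv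
           Rr P q xF pF xD pD c V1 V2 pV dq dc dV1 dV2 W Ap d : R) :
  0 < G -> 0 <= lam <= 1 -> 0 < a < 1 -> 0 <= M ->
  `|F1| <= M -> `|F2| <= M -> `|D1| <= M -> `|D2| <= M ->
  L * (1 - a ^+ 2) = 1 -> k * (1 - a) = 8 * M ->
  1 <= b -> k <= b -> 8 * M <= b ^+ 2 * (1 - a) -> Cbig G M L k < b ^+ 2 * (1 - a) ^+ 4 ->
  0 <= r -> r <= a -> r ^+ 2 = Rr -> 0 <= rho -> rho ^+ 2 = P -> b * r + rho = b ->
  0 < S -> S ^+ 2 = 1 - Rr -> S * iS = 1 -> (1 - Rr) * iv = 1 ->
  Rr = x1 ^+ 2 + x2 ^+ 2 -> P = p1 ^+ 2 + p2 ^+ 2 -> q = x1 * p1 + x2 * p2 ->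
  xF = x1 * F1 + x2 * F2 -> pF = p1 * F1 + p2 * F2 ->
  xD = x1 * D1 + x2 * D2 -> pD = p1 * D1 + p2 * D2 ->
  c = G * S - q ^+ 2 * iv - P ->
  V1 = c * x1 + lam * (xF * x1 - F1) -> V2 = c * x2 + lam * (xF * x2 - F2) ->
  pV = p1 * V1 + p2 * V2 ->
  dq = p1 * p1 + x1 * V1 + p2 * p2 + x2 * V2 ->
  dc = - (G * q * iS) - 2 * q * dq * iv - 2 * q ^+ 3 * iv ^+ 2 - 2 * pV ->
  dV1 = dc * x1 + c * p1 + lam * ((pF + xD) * x1 + xF * p1 - D1) ->
  dV2 = dc * x2 + c * p2 + lam * ((pF + xD) * x2 + xF * p2 - D2) ->
  W = V1 ^+ 2 + V2 ^+ 2 + p1 * dV1 + p2 * dV2 ->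
  Ap = 2 * b ^+ 2 * q - 2 * pV ->
  8 * b ^+ 4 * q - 2 * (b ^+ 2 * (1 + Rr) - P) * Ap = 0 ->
  d = 8 * b ^+ 4 * dq - 2 * Ap ^+ 2 - 2 * (b ^+ 2 * (1 + Rr) - P) * (2 * b ^+ 2 * dq - 2 * W) ->
  0 < d.
Proof.
move=> G0 /andP[l0 l1] /andP[a0 a1] M0 hF1 hF2 hD1 hD2 hL hk b1 bk b8 bC.
move=> r0 ra hr rho0 hrho hface S0 hS hiS hiv.
move=> eRr eP eq exF epF exD epD ec eV1 eV2 epV edq edc edV1 edV2 eW eAp hf1 ed.
have b0 : 0 < b by clear -b1; lra.
have a1' : 0 < 1 - a by clear -a1; lra.
have hrho' : rho = b * (1 - r) by clear -hface; lra.
have hP : P = b ^+ 2 * (1 - r) ^+ 2 by rewrite -hrho hrho'; ring.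
have Rr0 : 0 <= Rr by rewrite -hr sqr_ge0.
Time have Rra : Rr <= a ^+ 2 by clear -hr r0 ra; rewrite -hr; nra.
Time have a2 : 0 < 1 - a ^+ 2 by clear -a0 a1; nra.
Time have L1 : 1 <= L by clear -hL a2 a0; nra.
Time have iv0 : 0 < iv by clear -hiv Rra a2; nra.
Time have ivL : iv <= L by clear -hiv hL Rra a2 iv0; nra.
Time have S1 : S <= 1 by clear -hS S0 Rr0; nra.
Time have iS0 : 0 < iS by clear -hiS S0; nra.
Time have SR : 1 - Rr <= S by clear -hS S0 S1; nra.
Time have iSL : iS <= L.
  have : iS * (1 - a ^+ 2) <= 1 by clear -hiS SR Rra iS0; nra.
  clear -hL a2; nra.
have P0 : 0 <= P by rewrite eP addr_ge0 // sqr_ge0.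
have Pb : P <= b ^+ 2 by rewrite hP; clear -r0 ra a1 b0; nra.
have hx1 : `|x1| <= 1 by apply: nmk; clear -eRr Rra a1 a0; nra.
have hx2 : `|x2| <= 1 by apply: nmk; clear -eRr Rra a1 a0; nra.
have hp1 : `|p1| <= b by apply: nmk; clear -eP Pb b0; nra.
have hp2 : `|p2| <= b by apply: nmk; clear -eP Pb b0; nra.
have hxF : `|xF| <= 2 * M by rewrite exF; have := nD (nM hx1 hF1) (nM hx2 hF2); clear; lra.
have hpF : `|pF| <= 2 * b * M by rewrite epF; apply: le_trans (nD (nM hp1 hF1) (nM hp2 hF2)) (le_eqr _); ring.
have hxD : `|xD| <= 2 * M by rewrite exD; have := nD (nM hx1 hD1) (nM hx2 hD2); clear; lra.
have hpD : `|pD| <= 2 * b * M by rewrite epD; apply: le_trans (nD (nM hp1 hD1) (nM hp2 hD2)) (le_eqr _); ring.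
have CS : q ^+ 2 <= Rr * P.
  rewrite eq eRr eP -subr_ge0 (_ : _ - _ = (x1 * p2 - x2 * p1) ^+ 2); [exact: sqr_ge0| ring].
have hA : b ^+ 2 * (1 + Rr) - P = 2 * b ^+ 2 * r by rewrite hP -hr; ring.
have hpV : pV = c * q + lam * (xF * q - pF) by rewrite epV eV1 eV2 eq exF epF; ring.
have h11 : b ^+ 2 * q * (1 - r) + r * pV = 0.
  rewrite hA eAp in hf1.
  have : 8 * b ^+ 2 * (b ^+ 2 * q * (1 - r) + r * pV) = 0 by rewrite -hf1; ring.
  move/eqP; rewrite mulf_eq0 => /orP [|/eqP //].
  by rewrite mulf_eq0 pnatr_eq0 /= expf_eq0 /= gt_eqF.
pose K := b ^+ 2 * (1 - r) + r * c + r * lam * xF.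
have hK : q * K = r * lam * pF.
  have e : q * K - r * lam * pF = b ^+ 2 * q * (1 - r) + r * pV by rewrite hpV /K; ring.
  by apply/eqP; rewrite -subr_eq0 e h11.
have hc0 : - q ^+ 2 * iv - P <= c.
  rewrite ec; have : 0 <= G * S by apply: mulr_ge0; clear -G0 S0; lra.
  clear; lra.
have e1 : (1 - r) * (1 + r) * iv = 1 by rewrite -[RHS]hiv -hr; ring.
have r1 : r <= 1 by clear -ra a1; lra.
have hq2 : q ^+ 2 * iv * (1 + r) <= r ^+ 2 * b ^+ 2 * (1 - r).
  have CS' : q ^+ 2 <= r ^+ 2 * b ^+ 2 * (1 - r) ^+ 2 by rewrite -mulrA -hP hr.
  have := @ler_wpM2r _ (iv * (1 + r)) ltac:(clear -iv0 r0; nra) _ _ CS'.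
  have -> : r ^+ 2 * b ^+ 2 * (1 - r) ^+ 2 * (iv * (1 + r)) = r ^+ 2 * b ^+ 2 * (1 - r) * ((1 - r) * (1 + r) * iv) by ring.
  by rewrite e1 mulr1 mulrA.
have hrl : `|r * lam| <= 1.
  by apply: nmk; clear -r0 r1 l0 l1; nra.
have k3 : - (2 * M) <= r * lam * xF.
  by apply: nlo; apply: le_trans (nM hrl hxF) (le_eqr _); ring.
have k1 : - r * (q ^+ 2 * iv * (1 + r)) - r * (1 + r) * P <= r * (1 + r) * c.
  have := @ler_wpM2l _ (r * (1 + r)) ltac:(clear -r0; nra) _ _ hc0.
  by apply: le_trans; apply: le_eqr; ring.
have k2 : r * (q ^+ 2 * iv * (1 + r)) <= r * (r ^+ 2 * b ^+ 2 * (1 - r)).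
  exact: ler_wpM2l.
have k4 : (1 + r) * (- (2 * M)) <= (1 + r) * (r * lam * xF).
  by apply: ler_wpM2l => //; clear -r0; lra.
have hK1 : b ^+ 2 * (1 - a) / 2 <= (1 + r) * K.
  have e2 : (1 + r) * K = b ^+ 2 * (1 - r) * (1 + r) + r * (1 + r) * c + (1 + r) * (r * lam * xF) by rewrite /K; ring.
  rewrite e2.
  have : b ^+ 2 * (1 - a) <= b ^+ 2 * (1 - r) by apply: ler_wpM2l; [exact: sqr_ge0| clear -ra; lra].
  rewrite hP in k1.
  clear -k1 k2 k4 b8 r0 r1 M0; nra.
have K0 : b ^+ 2 * (1 - a) / 4 <= K.
  have : 0 < b ^+ 2 * (1 - a) by apply: mulr_gt0 => //; apply: exprn_gt0.
  clear -hK1 r0 r1; nra.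
have Kp : 0 < K.
  have : 0 < b ^+ 2 * (1 - a) by apply: mulr_gt0 => //; apply: exprn_gt0.
  clear -K0; lra.
have k0 : 0 <= k by clear -hk a1' M0; nra.
have hqK : `|q| * K <= 2 * b * M.
  have -> : `|q| * K = `|q * K| by rewrite normrM (gtr0_norm Kp).
  rewrite hK; apply: le_trans (nM hrl hpF) (le_eqr _); ring.
have hqb : `|q| * b <= k.
  have aq0 := normr_ge0 q.
  have : `|q| * (b ^+ 2 * (1 - a) / 4) <= 2 * b * M.
    apply: le_trans hqK; exact: ler_wpM2l.
  move=> H.
  have hb1a : 0 < b * (1 - a) by apply: mulr_gt0.
  have H3 : (`|q| * b) * (b * (1 - a)) <= k * (b * (1 - a)).
    have e3 : k * (b * (1 - a)) = b * (k * (1 - a)) by ring.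
    rewrite e3 hk; clear -H; nra.
  by rewrite ler_pM2r // in H3.
have aq0 := normr_ge0 q.
have hq1 : `|q| <= 1 by clear -hqb bk b1 aq0; nra.
have q2 : q ^+ 2 = `|q| ^+ 2 by rewrite real_normK // num_real.
have hq2b : q ^+ 2 * b ^+ 2 <= k ^+ 2.
  rewrite q2 -exprMn; have := mulr_ge0 aq0 (ltW b0); clear -hqb; nra.
have hqk : q ^+ 2 <= k ^+ 2.
  apply: le_trans hq2b; rewrite q2; have : 1 <= b ^+ 2 by clear -b1; nra.
  have := sqr_ge0 `|q|; clear; nra.
have b2 : 1 <= b ^+ 2 by clear -b1; nra.
have b4 : 0 <= b ^+ 4 by rewrite exprn_ge0 // ltW.
have Ra1 : Rr <= 1 by clear -Rra a0 a1; nra.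
have L0 : 0 <= L by clear -L1; lra.
have hdq : dq = P + c * Rr + lam * xF * (Rr - 1) by rewrite edq eV1 eV2 eRr eP exF; ring.
have hpdV : p1 * dV1 + p2 * dV2 = dc * q + c * P + lam * ((pF + xD) * q + xF * P - pD).
  by rewrite edV1 edV2 eq eP exF epD; ring.
have hdcq : dc * q = - (G * q ^+ 2 * iS) - 2 * (q ^+ 2 * dq * iv) - 2 * (q ^+ 2 * iv) ^+ 2 - 2 * (q * pV).
  by rewrite edc; ring.
pose dl := G * S - q ^+ 2 * iv.
have hcd : c = - P + dl by rewrite ec /dl; ring.
have hd2 : d = 8 * b ^+ 4 * (1 - r) * dq - 2 * Ap ^+ 2 + 8 * b ^+ 2 * r * W by rewrite ed hA; ring.
have hW : p1 * dV1 + p2 * dV2 <= W by rewrite eW; have := sqr_ge0 V1; have := sqr_ge0 V2; clear; lra.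
have hmain : 8 * b ^+ 4 * (1 - r) * dq + 8 * b ^+ 2 * r * (p1 * dV1 + p2 * dV2) =
   8 * b ^+ 6 * (1 - r) ^+ 4 + 8 * b ^+ 4 * (1 - r) * (dl * Rr + lam * xF * (Rr - 1))
   + 8 * b ^+ 2 * r * (dc * q + dl * P + lam * ((pF + xD) * q + xF * P - pD)).
  rewrite hpdV hdq hcd hP -hr; ring.
have q20 : 0 <= q ^+ 2 := sqr_ge0 q.
have hq2iv : q ^+ 2 * iv <= k ^+ 2 * L by apply: ler_pM => //; exact: ltW.
have GS0 : 0 <= G * S by apply: mulr_ge0; apply: ltW.
have hY1 : - (k ^+ 2 * L + 2 * M) <= dl * Rr + lam * xF * (Rr - 1).
  have h1 : q ^+ 2 * iv * Rr <= k ^+ 2 * L.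
    rewrite -[X in _ <= X]mulr1; apply: ler_pM => //; apply: mulr_ge0 => //; exact: ltW.
  have h2 : 0 <= G * S * Rr by apply: mulr_ge0.
  have h3 : `|lam * xF * (Rr - 1)| <= 2 * M.
    rewrite -mulrA mulrC -mulrA.
    have h4 : `|(Rr - 1) * lam| <= 1 by apply: nmk; clear -l0 l1 Rr0 Ra1; nra.
    by apply: le_trans (nM hxF h4) (le_eqr _); ring.
  have := nlo h3; rewrite /dl.
  have e : (G * S - q ^+ 2 * iv) * Rr = G * S * Rr - q ^+ 2 * iv * Rr by ring.
  rewrite e; clear -h1 h2; lra.
have hT1 : - 8 * b ^+ 4 * (k ^+ 2 * L + 2 * M) <= 8 * b ^+ 4 * (1 - r) * (dl * Rr + lam * xF * (Rr - 1)).
  have B0 : 0 <= k ^+ 2 * L + 2 * M by apply: addr_ge0; [apply: mulr_ge0 => //; exact: sqr_ge0| clear -M0; lra].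
  have : - (k ^+ 2 * L + 2 * M) <= (1 - r) * (dl * Rr + lam * xF * (Rr - 1)).
    clear -hY1 B0 r0 r1; nra.
  move=> H; have H2 := @ler_wpM2l _ (8 * b ^+ 4) ltac:(clear -b4; lra) _ _ H.
  by apply: (le_rw _ _ H2); ring.
pose C3 := G + k ^+ 2 * L + k + 4 * M.
have nG : `|G| <= G by rewrite gtr0_norm.
have nS : `|S| <= 1 by rewrite gtr0_norm.
have nl : `|lam| <= 1 by apply: nmk; clear -l0 l1; lra.
have nq2iv : `|q ^+ 2 * iv| <= k ^+ 2 * L.
  by rewrite ger0_norm //; apply: mulr_ge0 => //; exact: ltW.
have nPq : `|P * q| <= b * k.
  rewrite normrM (ger0_norm P0).
  have h1 : P * `|q| <= b ^+ 2 * `|q| by apply: ler_wpM2r.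
  have h2 : b * (`|q| * b) <= b * k by apply: ler_wpM2l => //; exact: ltW.
  apply: le_trans h1 _; by apply: (le_rw _ _ h2); ring.
have hpVb : `|pV| <= b * C3.
  have hpV2 : pV = G * S * q - q ^+ 2 * iv * q - P * q + lam * xF * q - lam * pF by rewrite hpV ec; ring.
  rewrite hpV2.
  have H := nD (nD (nD (nD (nM (nM nG nS) hq1) (nN (nM nq2iv hq1))) (nN nPq)) (nM (nM nl hxF) hq1)) (nN (nM nl hpF)).
  apply: le_trans H _.
  rewrite /C3.
  have : 0 <= (b - 1) * (G + k ^+ 2 * L + 2 * M).
    apply: mulr_ge0; first by clear -b1; lra.
    have : 0 <= k ^+ 2 * L by apply: mulr_ge0 => //; exact: sqr_ge0.
    clear -G0 M0; lra.
  clear; move=> H; apply: le_trans (_ : _ <= G + k ^+ 2 * L + b * k + 2 * M + 2 * b * M + (b - 1) * (G + k ^+ 2 * L + 2 * M)) _.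
    rewrite !mulr1 !mul1r; lra.
  apply: le_eqr; ring.
pose C4 := (2 * k + 2 * C3) ^+ 2.
have C30 : 0 <= C3.
  rewrite /C3; have : 0 <= k ^+ 2 * L by apply: mulr_ge0 => //; exact: sqr_ge0.
  clear -G0 M0 k0; lra.
have hApb : Ap ^+ 2 <= b ^+ 4 * C4.
  have h1 : `|2 * b ^+ 2 * q| <= b * (2 * k).
    rewrite normrM ger0_norm; last by apply: mulr_ge0 => //; exact: sqr_ge0.
    have h2 : b * (2 * (`|q| * b)) <= b * (2 * k) by apply: ler_wpM2l => //; [exact: ltW| clear -hqb; lra].
    by apply: (le_rw _ _ h2); ring.
  have h3 : `|Ap| <= b * (2 * k + 2 * C3).
    rewrite eAp; have := nD h1 (nN (nM (_ : `|2| <= 2) hpVb)).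
    move=> /(_ (ltac:(by rewrite ger0_norm))) H; apply: (le_trans H); apply: le_eqr; ring.
  have h4 : Ap ^+ 2 <= (b * (2 * k + 2 * C3)) ^+ 2.
    have := normr_ge0 Ap; rewrite -(real_normK (num_real Ap)); clear -h3; nra.
  apply: le_trans h4 _; rewrite exprMn /C4.
  have : b ^+ 2 <= b ^+ 4 by clear -b2; nra.
  have := sqr_ge0 (2 * k + 2 * C3); clear; nra.
pose C5 := 2 + G + k ^+ 2 * L + 2 * M.
pose C6 := G * L * k ^+ 2 + 2 * k ^+ 2 * C5 * L + 2 * k ^+ 4 * L ^+ 2 + 2 * k * C3.
pose C7 := C6 + k ^+ 2 * L + 2 * M * k + 6 * M.
have nP : `|P| <= b ^+ 2 by rewrite ger0_norm.
have nRr : `|Rr| <= 1 by rewrite ger0_norm.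
have nc : `|c| <= G + k ^+ 2 * L + b ^+ 2.
  rewrite ec; have H := nD (nD (nM nG nS) (nN nq2iv)) (nN nP).
  by apply: le_trans H (le_eqr _); ring.
have h3 : `|lam * xF * (Rr - 1)| <= 2 * M.
  rewrite -mulrA mulrC -mulrA.
  have h4 : `|(Rr - 1) * lam| <= 1 by apply: nmk; clear -l0 l1 Rr0 Ra1; nra.
  by apply: le_trans (nM hxF h4) (le_eqr _); ring.
have kL0 : 0 <= k ^+ 2 * L by apply: mulr_ge0 => //; exact: sqr_ge0.
have C50 : 0 <= C5 by rewrite /C5; clear -G0 M0 kL0; lra.
have ndq : `|dq| <= b ^+ 2 * C5.
  rewrite hdq; have H := nD (nD nP (nM nc nRr)) h3.
  apply: le_trans H _; rewrite /C5.
  have : 0 <= (b ^+ 2 - 1) * (G + k ^+ 2 * L + 2 * M).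
    by apply: mulr_ge0; clear -b2 G0 M0 kL0; lra.
  move=> H2; apply: le_trans (_ : _ <= b ^+ 2 + (G + k ^+ 2 * L + b ^+ 2) + 2 * M + (b ^+ 2 - 1) * (G + k ^+ 2 * L + 2 * M)) _.
    by rewrite mulr1; clear -H2; lra.
  by apply: le_eqr; ring.
have iS0' : 0 <= iS by exact: ltW.
have iv0' : 0 <= iv by exact: ltW.
have t1 : G * q ^+ 2 * iS <= G * L * k ^+ 2.
  have : q ^+ 2 * iS <= k ^+ 2 * L by apply: ler_pM.
  move=> H; have H2 := @ler_wpM2l _ G (ltW G0) _ _ H.
  by apply: (le_rw _ _ H2); ring.
have t2 : q ^+ 2 * dq * iv <= k ^+ 2 * C5 * L.
  have e : q ^+ 2 * dq * iv <= q ^+ 2 * `|dq| * iv.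
    apply: ler_wpM2r => //; apply: ler_wpM2l => //; exact: ler_norm.
  apply: le_trans e _; apply: ler_pM => //.
  - by apply: mulr_ge0.
  - have H := @ler_wpM2l _ (q ^+ 2) q20 _ _ ndq.
    apply: le_trans H _; have H2 := @ler_wpM2r _ C5 C50 _ _ hq2b.
    by apply: (le_rw _ _ H2); ring.
have t3 : (q ^+ 2 * iv) ^+ 2 <= k ^+ 4 * L ^+ 2.
  have : 0 <= q ^+ 2 * iv by apply: mulr_ge0.
  have e : k ^+ 4 * L ^+ 2 = (k ^+ 2 * L) ^+ 2 by ring.
  rewrite e; clear -hq2iv; nra.
have t4 : `|q * pV| <= k * C3.
  rewrite normrM; have H := @ler_wpM2l _ `|q| aq0 _ _ hpVb.
  apply: le_trans H _; have H2 := @ler_wpM2r _ C3 C30 _ _ hqb.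
  by apply: (le_rw _ _ H2); ring.
have hdcq' : - C6 <= dc * q.
  rewrite hdcq /C6; have := nhi t4; clear -t1 t2 t3; lra.
have hdlP : - (k ^+ 2 * L) <= dl * P.
  have e : dl * P = G * S * P - q ^+ 2 * iv * P by rewrite /dl; ring.
  have h1 : 0 <= G * S * P by apply: mulr_ge0.
  have h2 : q ^+ 2 * iv * P <= k ^+ 2 * L.
    have e2 : q ^+ 2 * iv * P = (q ^+ 2 * P) * iv by ring.
    rewrite e2 mulrC [X in _ <= X]mulrC; apply: ler_pM => //.
    - by apply: mulr_ge0.
    - apply: le_trans hq2b; apply: ler_wpM2l => //.
  rewrite e; clear -h1 h2; lra.
have hlamt : `|lam * ((pF + xD) * q + xF * P - pD)| <= 2 * M * k + 2 * M + 4 * M * b ^+ 2.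
  have g1 : `|(pF + xD) * q| <= 2 * M * k + 2 * M.
    rewrite mulrDl; have H := nD (_ : `|pF * q| <= 2 * M * k) (nM hxD hq1).
    apply: le_trans (H _) (le_eqr _); last by ring.
    rewrite normrM; have H2 := @ler_wpM2r _ `|q| aq0 _ _ hpF.
    apply: le_trans H2 _; have H3 := @ler_wpM2l _ (2 * M) ltac:(clear -M0; lra) _ _ hqb.
    by apply: (le_rw _ _ H3); ring.
  have g2 : `|xF * P| <= 2 * M * b ^+ 2 by apply: nM.
  have g3 : `|pD| <= 2 * M * b ^+ 2.
    apply: le_trans hpD _; have : b <= b ^+ 2 by clear -b1; nra.
    move=> H; have H2 := @ler_wpM2l _ (2 * M) ltac:(clear -M0; lra) _ _ H.
    by apply: (le_rw _ _ H2); ring.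
  have H := nM nl (nD (nD g1 g2) (nN g3)).
  by apply: le_trans H (le_eqr _); ring.
have hX : - (b ^+ 2 * C7) <= dc * q + dl * P + lam * ((pF + xD) * q + xF * P - pD).
  have := nlo hlamt.
  have : 0 <= (b ^+ 2 - 1) * (C6 + k ^+ 2 * L + 2 * M * k + 2 * M).
    apply: mulr_ge0; first by clear -b2; lra.
    have : 0 <= C6.
      rewrite /C6; have : 0 <= G * L * k ^+ 2 by apply: mulr_ge0 => //; [apply: mulr_ge0 => //; exact: ltW| exact: sqr_ge0].
      have : 0 <= k ^+ 2 * C5 * L by apply: mulr_ge0 => //; apply: mulr_ge0 => //; exact: sqr_ge0.
      have : 0 <= k ^+ 4 * L ^+ 2 by apply: mulr_ge0; [exact: exprn_ge0| exact: sqr_ge0].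
      have : 0 <= k * C3 by apply: mulr_ge0.
      clear; lra.
    have : 0 <= M * k by apply: mulr_ge0.
    clear -kL0 M0; lra.
  rewrite /C7; move: hdcq' hdlP; clear; move=> h1 h2 h3 h4.
  have e : b ^+ 2 * (C6 + k ^+ 2 * L + 2 * M * k + 6 * M) =
    (C6 + k ^+ 2 * L + 2 * M * k + 2 * M + 4 * M * b ^+ 2) + (b ^+ 2 - 1) * (C6 + k ^+ 2 * L + 2 * M * k + 2 * M) by ring.
  rewrite e; lra.
have C70 : 0 <= b ^+ 2 * C7.
  rewrite /C7 /C6; apply: mulr_ge0; first exact: sqr_ge0.
  have : 0 <= G * L * k ^+ 2 by apply: mulr_ge0 => //; [apply: mulr_ge0 => //; exact: ltW| exact: sqr_ge0].
  have : 0 <= k ^+ 2 * C5 * L by apply: mulr_ge0 => //; apply: mulr_ge0 => //; exact: sqr_ge0.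
  have : 0 <= k ^+ 4 * L ^+ 2 by apply: mulr_ge0; [exact: exprn_ge0| exact: sqr_ge0].
  have : 0 <= k * C3 by apply: mulr_ge0.
  have : 0 <= M * k by apply: mulr_ge0.
  clear -kL0 M0; move=> *; lra.
have hT3 : - 8 * b ^+ 4 * C7 <= 8 * b ^+ 2 * r * (dc * q + dl * P + lam * ((pF + xD) * q + xF * P - pD)).
  have H : - (b ^+ 2 * C7) <= r * (dc * q + dl * P + lam * ((pF + xD) * q + xF * P - pD)).
    clear -hX C70 r0 r1; nra.
  have H2 := @ler_wpM2l _ (8 * b ^+ 2) ltac:(have := sqr_ge0 b; clear; lra) _ _ H.
  by apply: (le_rw _ _ H2); ring.
have hWr : 8 * b ^+ 2 * r * (p1 * dV1 + p2 * dV2) <= 8 * b ^+ 2 * r * W.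
  apply: ler_wpM2l => //; apply: mulr_ge0 => //; have := sqr_ge0 b; clear; lra.
have h1r : (1 - a) ^+ 4 <= (1 - r) ^+ 4.
  apply: lerXn2r; rewrite ?nnegrE; clear -a1 ra r1; lra.
have eCb : Cbig G M L k = (k ^+ 2 * L + 2 * M) + C4 / 4 + C7 by [].
rewrite eCb in bC.
have b4p : 0 < b ^+ 4 by apply: exprn_gt0.
have hfin : 8 * b ^+ 4 * ((k ^+ 2 * L + 2 * M) + C4 / 4 + C7) < 8 * b ^+ 6 * (1 - r) ^+ 4.
  have H := @ler_wpM2l _ (b ^+ 2) (sqr_ge0 b) _ _ h1r.
  have H2 : 8 * b ^+ 4 * ((k ^+ 2 * L + 2 * M) + C4 / 4 + C7) < 8 * b ^+ 4 * (b ^+ 2 * (1 - a) ^+ 4).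
    by rewrite ltr_pM2l //; clear -b4p; lra.
  apply: lt_le_trans H2 _.
  have H3 := @ler_wpM2l _ (8 * b ^+ 4) ltac:(clear -b4p; lra) _ _ H.
  by apply: (le_rw _ _ H3); ring.
rewrite hd2.
move: hmain hT1 hT3 hApb hWr hfin; clear; move=> h1 h2 h3 h4 h5 h6.
have e : 8 * b ^+ 4 * ((k ^+ 2 * L + 2 * M) + C4 / 4 + C7) = 8 * b ^+ 4 * (k ^+ 2 * L + 2 * M) + 2 * (b ^+ 4 * C4) + 8 * b ^+ 4 * C7 by field.
rewrite e in h6.
have e2 : - 8 * b ^+ 4 * (k ^+ 2 * L + 2 * M) = - (8 * b ^+ 4 * (k ^+ 2 * L + 2 * M)) by ring.
have e3 : - 8 * b ^+ 4 * C7 = - (8 * b ^+ 4 * C7) by ring.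
rewrite e2 in h2; rewrite e3 in h3.
lra.
Qed.
End S1.

Section S2.
Variable R : realType.
Notation pt := 'rV[R]_5.

Lemma traj_isd (v : pt -> pt) (z : pt) (eps : R) (g : R -> pt) (s : R) (i : 'I_5) :
  trajectory v z eps g -> - eps < s < eps ->
  is_derive s 1 (fun u => g u ord0 i) (v (g s) ord0 i).
Proof.
move=> [_ ht] hs; have [_ [hd hv]] := ht s hs.
by rewrite -hv; apply: coord_isd.
Qed.

Lemma nx2_ge0 (z : pt) : 0 <= nx2 z.
Proof. by rewrite /nx2 addr_ge0 // sqr_ge0. Qed.
Lemma np2_ge0 (z : pt) : 0 <= np2 z.
Proof. by rewrite /np2 addr_ge0 // sqr_ge0. Qed.
Lemma normx_sq (z : pt) : normx z ^+ 2 = nx2 z.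
Proof. by rewrite /normx sqr_sqrtr // nx2_ge0. Qed.
Lemma normp_sq (z : pt) : normp z ^+ 2 = np2 z.
Proof. by rewrite /normp sqr_sqrtr // np2_ge0. Qed.
Lemma normx_ge0 (z : pt) : 0 <= normx z.
Proof. exact: sqrtr_ge0. Qed.
Lemma normp_ge0 (z : pt) : 0 <= normp z.
Proof. exact: sqrtr_ge0. Qed.

Lemma case1 (G : R) (F : R -> 'rV[R]_2) (lam a b eps : R) (g : R -> pt) :
  (forall t, derivable F t 1) -> 0 < a < 1 -> 0 < eps ->
  curvature_bound_function (@RxOmega R) (vfield G F lam) (m_a a) ->
  trajectory (vfield G F lam) (g 0) eps g ->
  (forall s, - eps < s < eps -> (Gamma_a a `&` Delta_b b) (g s)) ->
  normx (g 0) = a -> False.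
Proof.
move=> hF /andP [a0 a1] e0 [_ [_ [_ hcurv]]] htr hE hna.
set v := vfield G F lam.
have hs0 : - eps < 0 < eps by apply/andP; split; lra.
have hd := fun s i (hs : - eps < s < eps) => traj_isd i htr hs.
pose f1 := fun u => 2 * zx1 (g u) * zp1 (g u) + 2 * zx2 (g u) * zp2 (g u).
apply: (@max2 R (fun u => nx2 (g u)) f1 eps
  (2 * (zp1 (g 0) ^+ 2 + zp2 (g 0) ^+ 2 + zx1 (g 0) * v (g 0) ord0 (inord 3)
        + zx2 (g 0) * v (g 0) ord0 (inord 4)))) => //.
- move=> s hs.
  have H := isdD (isdX2 (hd s (inord 1) hs)) (isdX2 (hd s (inord 2) hs)).
  apply: (isd_conv H) => //.
  by rewrite /f1 /v vfield1E vfield2E.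
- move=> s /hE [h1 _]; rewrite /Gamma_a /= in h1.
  rewrite -!normx_sq hna.
  have := normx_ge0 (g s); nra.
- have H := isdD (isdM (isdM (isdC 0 2) (hd 0 (inord 1) hs0)) (hd 0 (inord 3) hs0))
                 (isdM (isdM (isdC 0 2) (hd 0 (inord 2) hs0)) (hd 0 (inord 4) hs0)).
  apply: (isd_conv H) => //.
  rewrite /v vfield1E vfield2E /zx1 /zx2 /zp1 /zp2 /=; ring.
- move=> hf10.
  have hz : RxOmega (g 0) by rewrite /RxOmega /= hna.
  have hm : m_a a (g 0) = 0 by rewrite /m_a -normx_sq hna; ring.
  have hDe : De (m_a a) (g 0) (v (g 0)) = 0.
    rewrite De_m /v vfield1E vfield2E.
    by move: hf10; rewrite /f1 => H; lra.
  have := hcurv (g 0) hz hm hDe.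
  rewrite D2e_m De_m.
  have [-> ->] := Dv_coord G lam (v (g 0)) (hF (zt (g 0))) ltac:(by rewrite -normx_sq hna; nra).
  rewrite /v vfield1E vfield2E; lra.
Qed.

End S2.

Section S3.
Variable R : realType.
Notation pt := 'rV[R]_5.

Lemma phi_le (b r rho : R) : 0 < b -> 0 <= r -> 0 <= rho -> b * r + rho <= b ->
  4 * b ^+ 4 * r ^+ 2 - (b ^+ 2 * (1 + r ^+ 2) - rho ^+ 2) ^+ 2 <= 0.
Proof.
move=> b0 r0 rho0 h.
have h1 : rho <= b * (1 - r) by lra.
have h2 : rho ^+ 2 <= b ^+ 2 * (1 - r) ^+ 2.
  have : 0 <= b * (1 - r) by lra.
  move=> H; rewrite -exprMn; clear -h1 rho0 H; nra.
have h3 : 2 * b ^+ 2 * r <= b ^+ 2 * (1 + r ^+ 2) - rho ^+ 2.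
  have e : b ^+ 2 * (1 + r ^+ 2) - b ^+ 2 * (1 - r) ^+ 2 = 2 * b ^+ 2 * r by ring.
  clear -h2 e; lra.
have h4 : 0 <= 2 * b ^+ 2 * r by apply: mulr_ge0 => //; apply: mulr_ge0 => //; exact: sqr_ge0.
have e : 4 * b ^+ 4 * r ^+ 2 = (2 * b ^+ 2 * r) ^+ 2 by ring.
rewrite e; clear -h3 h4; nra.
Qed.

Lemma phi_eq (b r rho : R) : b * r + rho = b ->
  4 * b ^+ 4 * r ^+ 2 - (b ^+ 2 * (1 + r ^+ 2) - rho ^+ 2) ^+ 2 = 0.
Proof. move=> h; have -> : rho = b - b * r by lra. ring. Qed.

Lemma case2 (G : R) (F : R -> 'rV[R]_2) (lam a b eps M : R) (g : R -> pt) :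
  0 < G -> 0 <= lam <= 1 -> 0 < a < 1 -> 0 <= M ->
  (forall t, derivable F t 1) ->
  (forall t (k : 'I_2), `|F t ord0 k| <= M /\ `|'D_1 F t ord0 k| <= M) ->
  1 <= b -> 8 * M / (1 - a) <= b -> 8 * M <= b ^+ 2 * (1 - a) ->
  Cbig G M ((1 - a ^+ 2)^-1) (8 * M / (1 - a)) < b ^+ 2 * (1 - a) ^+ 4 ->
  0 < eps ->
  trajectory (vfield G F lam) (g 0) eps g ->
  (forall s, - eps < s < eps -> (Gamma_a a `&` Delta_b b) (g s)) ->
  normx (g 0) < a -> b * normx (g 0) + normp (g 0) = b -> False.
Proof.
move=> G0 hlam ha M0 hF hFb b1 bk b8 bC e0 htr hE hna hface.
have [a0 a1] : 0 < a /\ a < 1 by move/andP: ha.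
set v := vfield G F lam.
have hs0 : - eps < 0 < eps by apply/andP; split; lra.
have hd := fun s i (hs : - eps < s < eps) => traj_isd i htr hs.
have hOm : forall s, - eps < s < eps -> nx2 (g s) < 1.
  move=> s hs; have [hO _] := htr.2 s hs; rewrite /RxOmega /= in hO.
  rewrite -normx_sq; have := normx_ge0 (g s); clear -hO; nra.
pose A u := b ^+ 2 * (1 + nx2 (g u)) - np2 (g u).
pose dR u := 2 * zx1 (g u) * zp1 (g u) + 2 * zx2 (g u) * zp2 (g u).
pose dP u := 2 * zp1 (g u) * v (g u) ord0 (inord 3) + 2 * zp2 (g u) * v (g u) ord0 (inord 4).
pose f1 u := 4 * b ^+ 4 * dR u - 2 * A u * (b ^+ 2 * dR u - dP u).
have hfd : forall s, - eps < s < eps ->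
    is_derive s 1 (fun u => 4 * b ^+ 4 * nx2 (g u) - A u ^+ 2) (f1 s).
  move=> s hs.
  have hR := isdD (isdX2 (hd s (inord 1) hs)) (isdX2 (hd s (inord 2) hs)).
  have hPp := isdD (isdX2 (hd s (inord 3) hs)) (isdX2 (hd s (inord 4) hs)).
  have hA := isdB (isdM (isdC s (b ^+ 2)) (isdD (isdC s 1) hR)) hPp.
  have hf := isdB (isdM (isdC s (4 * b ^+ 4)) hR) (isdX2 hA).
  apply: (isd_conv hf) => //.
  rewrite /f1 /A /dR /dP /v vfield1E vfield2E /nx2 /np2 /zx1 /zx2 /zp1 /zp2 /=; ring.
set z := g 0.
pose x1 : R := zx1 z. pose x2 : R := zx2 z. pose p1 : R := zp1 z. pose p2 : R := zp2 z.
pose V1 : R := v z ord0 (inord 3). pose V2 : R := v z ord0 (inord 4).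
pose F1 : R := F (zt z) ord0 (inord 0). pose F2 : R := F (zt z) ord0 (inord 1).
pose D1 : R := 'D_1 F (zt z) ord0 (inord 0). pose D2 : R := 'D_1 F (zt z) ord0 (inord 1).
have [hV1 hV2] := @vfield_curve_isd R G F lam g 0 (fun i => v (g 0) ord0 i) (fun i => hd 0 i hs0)
   (hF _) (hOm 0 hs0).
pose dV1 := dVval G lam x1 x2 p1 p2 F1 F2 D1 D2 1 p1 p2 V1 V2 x1 p1 F1 D1.
pose dV2 := dVval G lam x1 x2 p1 p2 F1 F2 D1 D2 1 p1 p2 V1 V2 x2 p2 F2 D2.
have e0' : v z ord0 (inord 0) = 1 by rewrite /v vfield0E.
have e1' : v z ord0 (inord 1) = p1 by rewrite /v vfield1E.
have e2' : v z ord0 (inord 2) = p2 by rewrite /v vfield2E.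
rewrite -/z e0' e1' e2' -/V1 -/V2 -/x1 -/x2 -/p1 -/p2 -/F1 -/F2 -/D1 -/D2 -/dV1 in hV1.
rewrite -/z e0' e1' e2' -/V1 -/V2 -/x1 -/x2 -/p1 -/p2 -/F1 -/F2 -/D1 -/D2 -/dV2 in hV2.
pose Rr := x1 ^+ 2 + x2 ^+ 2. pose P := p1 ^+ 2 + p2 ^+ 2.
pose q := x1 * p1 + x2 * p2. pose pV := p1 * V1 + p2 * V2.
pose dq := p1 * p1 + x1 * V1 + p2 * p2 + x2 * V2.
pose W := V1 ^+ 2 + V2 ^+ 2 + p1 * dV1 + p2 * dV2.
pose Ap := 2 * b ^+ 2 * q - 2 * pV.
pose A0 := b ^+ 2 * (1 + Rr) - P.
pose d := 8 * b ^+ 4 * dq - 2 * Ap ^+ 2 - 2 * A0 * (2 * b ^+ 2 * dq - 2 * W).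
have hX1 := hd 0 (inord 1) hs0. have hX2 := hd 0 (inord 2) hs0.
have hP1 := hd 0 (inord 3) hs0. have hP2 := hd 0 (inord 4) hs0.
rewrite -/z e1' in hX1. rewrite -/z e2' in hX2.
rewrite -/z -/V1 in hP1. rewrite -/z -/V2 in hP2.
have hdR := isdD (isdM (isdM (isdC 0 2) hX1) hP1) (isdM (isdM (isdC 0 2) hX2) hP2).
have hdP := isdD (isdM (isdM (isdC 0 2) hP1) hV1) (isdM (isdM (isdC 0 2) hP2) hV2).
have hR := isdD (isdX2 hX1) (isdX2 hX2).
have hPp := isdD (isdX2 hP1) (isdX2 hP2).
have hA := isdB (isdM (isdC 0 (b ^+ 2)) (isdD (isdC 0 1) hR)) hPp.
have hf1 := isdB (isdM (isdC 0 (4 * b ^+ 4)) hdR) (isdM (isdM (isdC 0 2) hA) (isdB (isdM (isdC 0 (b ^+ 2)) hdR) hdP)).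
have hf1d : is_derive (0:R) 1 f1 d.
  apply: (isd_conv hf1).
    by rewrite funeqE => u; rewrite /f1 /dR /dP /A /nx2 /np2 /zx1 /zx2 /zp1 /zp2 /=; ring.
  rewrite /d /Ap /A0 /W /dq /pV /q /Rr /P /x1 /x2 /p1 /p2 /z /zx1 /zx2 /zp1 /zp2 /=.
  have eV1 : vfield G F lam (g 0) ord0 (inord 3) = V1 by [].
  have eV2 : vfield G F lam (g 0) ord0 (inord 4) = V2 by [].
  rewrite eV1 eV2; ring.
apply: (@max2 R (fun u => 4 * b ^+ 4 * nx2 (g u) - A u ^+ 2) f1 eps d e0 hfd _ hf1d).
  move=> s hs; have [h1 [h2 h3]] := hE s hs; rewrite /Gamma_a /= in h1.
  rewrite /A -!normx_sq -!normp_sq.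
  rewrite (phi_eq hface).
  apply: phi_le => //; [clear -b1; lra| exact: normx_ge0| exact: normp_ge0].
move=> hf10.
have Rr1 : Rr < 1 by have := hOm 0 hs0.
pose L := (1 - a ^+ 2)^-1. pose k := 8 * M / (1 - a).
pose r := normx z. pose rho := normp z.
pose S := Num.sqrt (1 - Rr). pose iS := S^-1. pose iv := (1 - Rr)^-1.
pose xF := x1 * F1 + x2 * F2. pose pF := p1 * F1 + p2 * F2.
pose xD := x1 * D1 + x2 * D2. pose pD := p1 * D1 + p2 * D2.
pose c := cval G x1 x2 p1 p2. pose dc := dcval G x1 x2 p1 p2 p1 p2 V1 V2.
apply: (@alg R G lam a b M L k x1 x2 p1 p2 F1 F2 D1 D2 r rho S iS iv Rr P q xF pF xD pD c V1 V2 pV dq dc dV1 dV2 W Ap d) => //.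
- by have [h _] := hFb (zt z) (inord 0).
- by have [h _] := hFb (zt z) (inord 1).
- by have [_ h] := hFb (zt z) (inord 0).
- by have [_ h] := hFb (zt z) (inord 1).
- rewrite /L mulVf // gt_eqF // subr_gt0; clear -a0 a1; nra.
- rewrite /k; field; rewrite subr_eq0; apply/eqP => h; rewrite h in a1; clear -a1; lra.
- exact: normx_ge0.
- exact: ltW.
- exact: normx_sq.
- exact: normp_ge0.
- exact: normp_sq.
- by rewrite /S sqrtr_gt0 subr_gt0.
- by rewrite /S sqr_sqrtr // subr_ge0 ltW.
- by rewrite /iS mulfV // gt_eqF // /S sqrtr_gt0 subr_gt0.
- by rewrite /iv mulfV // gt_eqF // subr_gt0.
- by rewrite /V1 /v vfield3E.
- by rewrite /V2 /v vfield4E.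
- have Sp : 0 < S by rewrite /S sqrtr_gt0 subr_gt0.
  have h1 : 1 - Rr != 0 by rewrite gt_eqF // subr_gt0.
  rewrite /dc /dcval /iS /iv -/Rr -/S /dq /pV /q; field.
  by rewrite h1 gt_eqF.
- rewrite /dV1 /dVval -/dc -/c -/xF /pF /xD; ring.
- rewrite /dV2 /dVval -/dc -/c -/xF /pF /xD; ring.
- rewrite -hf10 /f1 /dR /dP /A /Ap /pV /q /Rr /P /x1 /x2 /p1 /p2 /V1 /V2 /z /nx2 /np2 /zx1 /zx2 /zp1 /zp2; ring.
Qed.
End S3.

Theorem lemma4p2 (R : realType) (G T : R) (F : R -> 'rV[R]_2) (a : R) :
  0 < G -> 0 < T -> Tperiodic T F -> C1_fun F -> 0 < a < 1 ->
  (forall lam : R, 0 <= lam <= 1 ->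
     curvature_bound_function (@RxOmega R) (vfield G F lam) (m_a a)) ->
  exists b : R, 0 < b /\
    forall lam : R, 0 <= lam <= 1 ->
      bound_set (vfield G F lam) (Gamma_a a `&` Delta_b b).
Proof.
move=> G0 T0 hper [hFd hFc] ha hcurv.
have [a0 a1] : 0 < a /\ a < 1 by move/andP: ha.
have [M [M0 hFb]] := F_bounds T0 hper hFd hFc.
pose L := (1 - a ^+ 2)^-1. pose k := 8 * M / (1 - a).
have a1' : 0 < 1 - a by lra.
have a4 : 0 < (1 - a) ^+ 4 by apply: exprn_gt0.
have k0 : 0 <= k by rewrite /k divr_ge0 //; [lra | exact: ltW].
pose C := Cbig G M L k.
have C0 : 0 <= (`|C| + 1) / (1 - a) ^+ 4 by rewrite divr_ge0 // ?ltW //; have := normr_ge0 C; lra.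
pose b := 1 + k + (`|C| + 1) / (1 - a) ^+ 4.
have b1 : 1 <= b by rewrite /b; lra.
exists b; split; first lra.
move=> lam hlam; split; first exact: E_closed.
split; first by move=> z [_ [h _]].
move=> eps e0 [z [g [hb [htr hin]]]].
have hg0 : g 0 = z by case: htr.
have [_ hcases] := bdry_cases a1 hb.
rewrite -hg0 in htr hcases.
case: hcases => [hna | [hna hface]].
  exact: (case1 hFd ha e0 (hcurv lam hlam) htr hin hna).
apply: (case2 G0 hlam ha M0 hFd hFb b1 _ _ _ e0 htr hin hna hface).
- rewrite -/k /b; have := normr_ge0 C; lra.
- have bk : k <= b by rewrite /b; lra.
  have : 8 * M <= b * (1 - a).
    by rewrite -ler_pdivrMr.
  have : b <= b ^+ 2 by nra.
  nra.
- have : `|C| + 1 <= b * (1 - a) ^+ 4.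
    by rewrite -ler_pdivrMr // /b; lra.
  have : b <= b ^+ 2 by nra.
  have := ler_norm C.
  rewrite -/L -/k -/C; nra.
Qed.
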